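(* Let $P(x)=a_0(x^2-a_1^2)\cdots(x^2-a_n^2)$ with $a_0\ne0$ and $0<a_1\le\cdots\le a_n$. Then $P(x)/x^j$ for $j=0,\ldots,2n$; $P^{(1)}(x)/x^j$ for $j=0,\ldots,2n-2$; and $P^{(2)}(x)/x^j$ for $j=0,\ldots,2n-4$ are strictly monotonically increasing for $x>a_n$ when $a_0>0$, and strictly monotonically decreasing for $x>a_n$ when $a_0<0$.
   Context: $P^{(l)}$ denotes the $l$-th derivative of $P$. *)

(* Defs.v *)
From HB Require Import structures.
From mathcomp Require Import all_boot all_order all_algebra.
Set Implicit Arguments. Unset Strict Implicit. Unset Printing Implicit Defensive.
Import Order.TTheory GRing.Theory Num.Theory.
Local Open Scope ring_scope.

Definition Ppoly (R : comNzRingType) (n : nat) (a0 : R) (a : nat -> R) : {poly R} :=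
  a0 *: \prod_(1 <= i < n.+1) ('X^2 - (a i ^+ 2)%:P).

Definition strictly_increasing_gt (R : realDomainType) (c : R) (f : R -> R) :=
  forall x y : R, c < x -> x < y -> f x < f y.
Definition strictly_decreasing_gt (R : realDomainType) (c : R) (f : R -> R) :=
  forall x y : R, c < x -> x < y -> f y < f x.

(* Main.v *)
Require Import Defs.
From HB Require Import structures.
From mathcomp Require Import all_boot all_order all_algebra.
From mathcomp Require Import ring lra zify.
Import Order.TTheory GRing.Theory Num.Theory.
Set Implicit Arguments. Unset Strict Implicit.
Local Open Scope ring_scope.

Definition gq (R : realFieldType) (q : {poly R}) (d : nat) (x : R) := q.[x] / x ^+ d.
Definition PN (R : realFieldType) (c : R) (q : {poly R}) (d : nat) :=
  forall x y, c < x -> x < y -> 0 < gq q d x /\ gq q d x <= gq q d y.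
Definition SPN (R : realFieldType) (c : R) (q : {poly R}) (d : nat) :=
  forall x y, c < x -> x < y -> 0 < gq q d x /\ gq q d x < gq q d y.

Lemma gqM (R : realFieldType) (q1 q2 : {poly R}) d1 d2 x :
  gq (q1 * q2) (d1 + d2) x = gq q1 d1 x * gq q2 d2 x.
Proof. by rewrite /gq hornerM exprD invfM mulrACA. Qed.

Lemma PN_mul (R : realFieldType) (c : R) q1 q2 d1 d2 :
  PN c q1 d1 -> PN c q2 d2 -> PN c (q1 * q2) (d1 + d2).
Proof.
move=> h1 h2 x y cx xy; rewrite !gqM.
have [p1 l1] := h1 x y cx xy; have [p2 l2] := h2 x y cx xy.
split; first exact: mulr_gt0. nra.
Qed.

Lemma SPN_mul (R : realFieldType) (c : R) q1 q2 d1 d2 :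
  SPN c q1 d1 -> PN c q2 d2 -> SPN c (q1 * q2) (d1 + d2).
Proof.
move=> h1 h2 x y cx xy; rewrite !gqM.
have [p1 l1] := h1 x y cx xy; have [p2 l2] := h2 x y cx xy.
split; first exact: mulr_gt0. nra.
Qed.

Lemma SPN_PN (R : realFieldType) (c : R) q d : SPN c q d -> PN c q d.
Proof. move=> h x y cx xy; have [p l] := h x y cx xy; split=> //; exact: ltW. Qed.

Lemma PN_add (R : realFieldType) (c : R) q1 q2 d :
  PN c q1 d -> PN c q2 d -> PN c (q1 + q2) d.
Proof.
move=> h1 h2 x y cx xy; rewrite /gq !hornerD !mulrDl.
have [p1 l1] := h1 x y cx xy; have [p2 l2] := h2 x y cx xy.
rewrite /gq in p1 l1 p2 l2; split; lra.
Qed.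

Lemma PN_muln2 (R : realFieldType) (c : R) q d : PN c q d -> PN c (q *+ 2) d.
Proof.
move=> h x y cx xy; rewrite /gq !hornerMn !mulr2n !mulrDl.
have [p l] := h x y cx xy; rewrite /gq in p l; split; lra.
Qed.

Lemma PN_X (R : realFieldType) (c : R) : 0 <= c -> PN c 'X 1.
Proof.
move=> c0 x y cx xy; rewrite /gq !hornerX !expr1 !divff ?ltr01 //.
- by apply/lt0r_neq0; lra.
- by apply/lt0r_neq0; lra.
Qed.

Lemma PN_1 (R : realFieldType) (c : R) : PN c 1 0.
Proof. by move=> x y cx xy; rewrite /gq !hornerC !expr0 !divr1. Qed.

Lemma SPN_D (R : realFieldType) (c b : R) : 0 < b -> b <= c ->
  SPN c ('X^2 - (b ^+ 2)%:P) 2.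
Proof.
move=> b0 bc x y cx xy; rewrite /gq !hornerE.
have x0 : 0 < x ^+ 2 by rewrite exprn_gt0 //; lra.
have y0 : 0 < y ^+ 2 by rewrite exprn_gt0 //; lra.
split.
- apply: divr_gt0 => //.
  have h1 : 0 < x - b by lra.
  have h2 : 0 < x + b by lra.
  have := mulr_gt0 h1 h2; rewrite !expr2; nra.
rewrite ltr_pdivrMr // mulrAC ltr_pdivlMr //.
have b2 : 0 < b ^+ 2 by rewrite exprn_gt0.
have xy2 : x ^+ 2 < y ^+ 2 by rewrite ltrXn2r //; lra.
have d2 : 0 < y ^+ 2 - x ^+ 2 by rewrite subr_gt0.
have := mulr_gt0 b2 d2; nra.
Qed.

Lemma PN_strict (R : realFieldType) (c : R) q d j : 0 <= c ->
  (SPN c q d /\ (j <= d)%N \/ PN c q d /\ (j < d)%N) ->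
  forall x y, c < x -> x < y -> q.[x] / x ^+ j < q.[y] / y ^+ j.
Proof.
move=> c0 H.
have jd : (j <= d)%N by case: H => -[_ h] //; exact: ltnW.
have e : forall x : R, 0 < x -> q.[x] / x ^+ j = gq q d x * x ^+ (d - j).
  move=> x x0; rewrite /gq -(subnK jd) exprD subnK //.
  have h1 : x ^+ (d - j) != 0 by rewrite expf_neq0 // lt0r_neq0.
  have h2 : x ^+ j != 0 by rewrite expf_neq0 // lt0r_neq0.
  by rewrite invfM [_^-1 * _]mulrC mulrA divfK.
move=> x y cx xy; rewrite !e; [|lra|lra].
have lxy : x ^+ (d - j) <= y ^+ (d - j) by apply: lerXn2r; rewrite ?nnegrE; lra.
have px : 0 < x ^+ (d - j) by rewrite exprn_gt0 //; lra.
case: H => -[h hj].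
- have [p l] := h x y cx xy; nra.
- have [p l] := h x y cx xy.
  have sxy : x ^+ (d - j) < y ^+ (d - j) by rewrite ltrXn2r ?subn_eq0 -?ltnNge //; lra.
  nra.
Qed.
Lemma ar0 (j k : nat) : (j + 2 * 0 <= 2 * k.+1)%N -> (j <= k.*2.+2)%N.
Proof. lia. Qed.
Lemma ar1 (j k : nat) : (j + 2 * 1 <= 2 * k.+1)%N -> (j < k.*2.+1)%N.
Proof. lia. Qed.
Lemma ar2 (j k : nat) : (j + 2 * 2 <= 2 * k.+1)%N -> (j < k.*2)%N.
Proof. lia. Qed.

Theorem lemmaB5 (R : realFieldType) (n : nat) (a0 : R) (a : nat -> R)
  (hn : (1 <= n)%N) (ha0 : a0 != 0) (ha1 : 0 < a 1%N)
  (hmono : forall i : nat, (1 <= i < n)%N -> a i <= a i.+1) :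
  let P := Ppoly n a0 a in
  let f := fun (l j : nat) (x : R) => (P^`(l)).[x] / x ^+ j in
  let ok := fun (l j : nat) => (j + 2 * l <= 2 * n)%N in
  (0 < a0 -> forall l j : nat, (l <= 2)%N -> ok l j ->
     strictly_increasing_gt (a n) (f l j)) /\
  (a0 < 0 -> forall l j : nat, (l <= 2)%N -> ok l j ->
     strictly_decreasing_gt (a n) (f l j)).
Proof.
move=> P f ok.
have hle : forall i k, (1 <= i)%N -> (i + k <= n)%N -> a i <= a (i + k)%N.
  move=> i; elim=> [|k IH] i1 ik; first by rewrite addn0.
  apply: le_trans (IH i1 _) _; first by rewrite addnS in ik; exact: ltnW.
  rewrite addnS; apply: hmono; rewrite addnS in ik; rewrite ik andbT.
  exact: leq_trans i1 (leq_addr _ _).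
have hpos : forall i, (1 <= i <= n)%N -> 0 < a i /\ a i <= a n.
  move=> i /andP[i1 iN]; split.
  - apply: lt_le_trans ha1 _; have := hle 1%N (i - 1)%N isT.
    by rewrite subnKC //; apply.
  - have := hle i (n - i)%N i1; rewrite subnKC //; apply.
    by [].
have c0 : 0 < a n by have [] := hpos n; [rewrite hn leqnn|].
set c := a n in hpos c0 *.
pose D i : {poly R} := 'X^2 - (a i ^+ 2)%:P.
pose Q m := \prod_(1 <= i < m.+1) D i.
have fE : forall l j x, f l j x = a0 * ((Q n)^`(l).[x] / x ^+ j).
  move=> l j x; rewrite /f /P /Ppoly derivnZ hornerZ mulrA //.
have dD : forall i, (D i)^`() = 'X *+ 2.
  by move=> i; rewrite /D derivB derivXn derivC subr0 expr1.
have ddD : forall i, (D i)^`()^`() = 1 *+ 2.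
  by move=> i; rewrite dD derivMn derivX.
have hDs : forall i, (1 <= i <= n)%N -> SPN c (D i) 2.
  by move=> i hi; apply: SPN_D; apply hpos.
clearbody D.
have key : forall k, (k.+1 <= n)%N -> [/\ SPN c (Q k.+1) k.*2.+2,
    PN c (Q k.+1)^`() k.*2.+1 & PN c (Q k.+1)^`()^`() k.*2].
  elim=> [|k IH] kn.
  - rewrite /Q big_nat1 ddD dD; split.
    + by apply: hDs; rewrite leqnn.
    + by apply: PN_muln2; apply: PN_X; exact: ltW.
    + by apply: PN_muln2; apply: PN_1.
  have [h0 h1 h2] := IH (ltnW kn).
  have hD : SPN c (D k.+2) 2.
    by apply: hDs; rewrite kn.
  have hD1 : PN c (D k.+2)^`() 1.
    by rewrite dD; apply: PN_muln2; apply: PN_X; exact: ltW.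
  have hD2 : PN c (D k.+2)^`()^`() 0.
    by rewrite ddD; apply: PN_muln2; apply: PN_1.
  have eQ : Q k.+2 = Q k.+1 * D k.+2 by rewrite /Q big_nat_recr.
  rewrite eQ !derivM !derivD !derivM; split.
  - have -> : (k.+1).*2.+2 = (k.*2.+2 + 2)%N by rewrite doubleS addn2.
    exact: SPN_mul h0 (SPN_PN hD).
  - have -> : (k.+1).*2.+1 = (k.*2.+1 + 2)%N by rewrite doubleS addn2.
    apply: PN_add; first exact: PN_mul h1 (SPN_PN hD).
    have -> : (k.*2.+1 + 2 = k.*2.+2 + 1)%N by rewrite !addn2 addn1.
    exact: PN_mul (SPN_PN h0) hD1.
  - have E1 : ((k.+1).*2 = k.*2 + 2)%N by rewrite doubleS addn2.
    apply: PN_add; apply: PN_add.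
    + rewrite E1; exact: PN_mul h2 (SPN_PN hD).
    + have -> : (k.+1).*2 = (k.*2.+1 + 1)%N by rewrite doubleS addn1.
      exact: PN_mul h1 hD1.
    + have -> : (k.+1).*2 = (k.*2.+1 + 1)%N by rewrite doubleS addn1.
      exact: PN_mul h1 hD1.
    + have -> : (k.+1).*2 = (k.*2.+2 + 0)%N by rewrite doubleS addn0.
      exact: PN_mul (SPN_PN h0) hD2.
have strict : forall l j, (l <= 2)%N -> ok l j -> forall x y, c < x -> x < y ->
    (Q n)^`(l).[x] / x ^+ j < (Q n)^`(l).[y] / y ^+ j.
  have nk : n = n.-1.+1 by rewrite prednK.
  move=> l j hl; rewrite /ok.
  have [h0 h1 h2] := key n.-1 ltac:(by rewrite -nk).
  rewrite nk; move: h0 h1 h2; set k := n.-1 => h0 h1 h2; clearbody k.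
  case: l hl => [|[|[|l]]] // _ hj; apply: (PN_strict (c := c) (d := _)) => //;
    try exact: ltW.
  - by left; split; [exact h0| exact: ar0].
  - by right; split; [exact h1| exact: ar1].
  - by right; split; [exact h2| exact: ar2].
split=> ha l j hl hok x y cx xy; rewrite !fE.
- by rewrite ltr_pM2l //; apply: strict.
- by rewrite ltr_nM2l //; apply: strict.
Qed.
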